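(* Let $C,D\subseteq[n]\times[n]$ be diagrams and $k,l\in[n]$. If $\widehat{C}\le\widehat{D}$, then $\widehat{C}_{\mathrm{aug}}\le D$. In particular, every diagram $C'\le\widehat{D}$ with no boxes in row $k$ can be obtained from some diagram $C\le D$ by removing any boxes in row $k$ or column $l$ from $C$.
   Context: A diagram $D\subseteq[n]\times[n]$ is a set of boxes $(i,j)$ (row $i$, column $j$), identified with its column sequence $(D_1,\dots,D_n)$, $D_j=\{i:(i,j)\in D\}$. For $R,S\subseteq[n]$, $R\le S$ means $\#R=\#S$ and the $k$-th smallest element of $R$ is at most the $k$-th smallest element of $S$ for each $k$; for diagrams $C\le D$ means $C_j\le D_j$ for all $j$. For fixed $k,l$, $\widehat{C}$ and $\widehat{D}$ denote the diagrams obtained from $C$ and $D$ by removing all boxes in row $k$ or column $l$. For a diagram $\widehat{C}$ (with $D$ fixed), $\widehat{C}_{\mathrm{aug}}=\widehat{C}\cup\{(k,i):(k,i)\in D\}\cup\{(i,l):(i,l)\in D\}$. *)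

(* Defs.v *)
From mathcomp Require Import all_boot.
Set Implicit Arguments. Unset Strict Implicit. Unset Printing Implicit Defensive.

(* A diagram in [n] x [n]: a set of boxes (i, j) = (row, column), indices 'I_n. *)
Definition diagram (n : nat) := {set 'I_n * 'I_n}.

Definition dcol n (D : diagram n) (j : 'I_n) : {set 'I_n} :=
  [set i | (i, j) \in D].

Definition sorted_elems n (R : {set 'I_n}) : seq nat :=
  sort leq [seq val i | i <- enum R].

Definition setle n (R S : {set 'I_n}) : Prop :=
  #|R| = #|S| /\
  forall m, m < #|R| -> nth 0 (sorted_elems R) m <= nth 0 (sorted_elems S) m.

Definition dle n (C D : diagram n) : Prop :=
  forall j : 'I_n, setle (dcol C j) (dcol D j).

Definition hat n (k l : 'I_n) (C : diagram n) : diagram n :=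
  [set b in C | (b.1 != k) && (b.2 != l)].

Definition aug n (k l : 'I_n) (D Chat : diagram n) : diagram n :=
  Chat :|: [set b in D | b.1 == k] :|: [set b in D | b.2 == l].

(* Main.v *)
Require Import Defs.
From mathcomp Require Import all_boot.
Set Implicit Arguments. Unset Strict Implicit.

Lemma nth_le_count (s : seq nat) t i : sorted leq s -> i < size s ->
  (nth 0 s i <= t) = (i < count (fun x => x <= t) s).
Proof.
elim: s i => [|x s IH] i //= Hs Hi.
have Hall : all (leq x) s := order_path_min leq_trans Hs.
have Hs' : sorted leq s := path_sorted Hs.
have H0 : t < x -> count (fun y => y <= t) s = 0.
  move=> ltx; rewrite (@eq_in_count _ _ pred0) ?count_pred0 // => y /(allP Hall) xy /=.
  apply/negbTE; rewrite -ltnNge; exact: leq_trans ltx xy.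
case: i Hi => [|i] Hi /=.
  case: (leqP x t) => Hxt; first by rewrite add1n.
  by rewrite add0n H0.
rewrite ltnS in Hi; rewrite IH //.
case: (leqP x t) => Hxt; first by rewrite add1n ltnS.
by rewrite add0n H0.
Qed.

Lemma sorted_le_count (r s : seq nat) : sorted leq r -> sorted leq s -> size r = size s ->
 (forall i, i < size r -> nth 0 r i <= nth 0 s i) <->
 (forall t, count (fun x => x <= t) s <= count (fun x => x <= t) r).
Proof.
move=> Hr Hs Hsz; split.
- move=> H t. case Ec: (count (fun x => x <= t) s) => [|c] //.
  have hc : c < size s by rewrite -Ec count_size.
  have h1 : nth 0 s c <= t by rewrite nth_le_count // Ec.
  have h2 : nth 0 r c <= t by apply: leq_trans h1; apply: H; rewrite Hsz.
  by rewrite nth_le_count ?Hsz // in h2.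
- move=> H i hi.
  have h1 : i < count (fun x => x <= nth 0 s i) s by rewrite -nth_le_count // -Hsz.
  have h2 := leq_trans h1 (H _).
  by rewrite -nth_le_count in h2.
Qed.

Definition cnt n (R : {set 'I_n}) t := #|R :&: [set x : 'I_n | val x <= t]|.

Lemma se_sorted n (R : {set 'I_n}) : sorted leq (sorted_elems R).
Proof. apply: sort_sorted; exact: leq_total. Qed.

Lemma se_size n (R : {set 'I_n}) : size (sorted_elems R) = #|R|.
Proof. by rewrite /sorted_elems size_sort size_map cardE. Qed.

Lemma se_count n (R : {set 'I_n}) t :
  count (fun x => x <= t) (sorted_elems R) = cnt R t.
Proof.
rewrite /sorted_elems count_sort count_map /cnt cardE.
rewrite (perm_size (enum_setI _ _)) size_filter.
by apply: eq_count => x /=; rewrite inE.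
Qed.

Lemma setleP n (R S : {set 'I_n}) :
  setle R S <-> #|R| = #|S| /\ forall t, cnt S t <= cnt R t.
Proof.
rewrite /setle; split.
- move=> [Hc H]; split => // t.
  rewrite -!se_count.
  have := (sorted_le_count (se_sorted R) (se_sorted S)).
  rewrite !se_size => /(_ Hc) [+ _]; apply => i; exact: H.
- move=> [Hc H]; split => // m hm.
  have := (sorted_le_count (se_sorted R) (se_sorted S)).
  rewrite !se_size => /(_ Hc) [_ ]; apply => [t|]; last by [].
  by rewrite !se_count.
Qed.

Lemma cntU1 n (R : {set 'I_n}) k t : k \notin R ->
  cnt (k |: R) t = (val k <= t) + cnt R t.
Proof.
move=> kR; rewrite /cnt setIUl.
case: (boolP (val k <= t)) => hk.
  have -> : [set k] :&: [set x : 'I_n | val x <= t] = [set k].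
    by apply/setP => x; rewrite !inE; case: eqP => // ->; rewrite hk.
  by rewrite cardsU1 inE (negbTE kR).
have -> : [set k] :&: [set x : 'I_n | val x <= t] = set0.
  by apply/setP => x; rewrite !inE; case: eqP => // ->; rewrite (negbTE hk).
by rewrite set0U.
Qed.

Lemma setleU1 n (R S : {set 'I_n}) k : k \notin R -> k \notin S ->
  setle R S -> setle (k |: R) (k |: S).
Proof.
move=> kR kS /setleP [Hc H]; apply/setleP; split.
  by rewrite !cardsU1 kR kS Hc.
by move=> t; rewrite !cntU1 // leq_add2l.
Qed.

Lemma setle_refl n (R : {set 'I_n}) : setle R R.
Proof. by split. Qed.

Theorem lemma5p6 (n : nat) (k l : 'I_n) :
  (forall C D : diagram n,
      dle (hat k l C) (hat k l D) -> dle (aug k l D (hat k l C)) D) /\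
  (forall D C' : diagram n,
      dle C' (hat k l D) -> (forall j : 'I_n, (k, j) \notin C') ->
      exists C : diagram n, dle C D /\ hat k l C = C').
Proof.
have P1 : forall C D : diagram n,
    dle (hat k l C) (hat k l D) -> dle (aug k l D (hat k l C)) D.
  move=> C D H j.
  case: (eqVneq j l) => [->|jl].
    have -> : dcol (aug k l D (hat k l C)) l = dcol D l.
      apply/setP => i; rewrite !inE /= eqxx !andbF /= andbT.
      by case: ((i, l) \in D); rewrite ?orbT ?andbF.
    exact: setle_refl.
  have nC : forall E : diagram n, k \notin dcol (hat k l E) j.
    by move=> E; rewrite !inE /= eqxx andbF.
  case: (boolP ((k, j) \in D)) => kj.
    have -> : dcol (aug k l D (hat k l C)) j = k |: dcol (hat k l C) j.
      apply/setP => i; rewrite !inE /= (negbTE jl) !andbF !orbF andbT.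
      by case: (eqVneq i k) => [->|ik]; rewrite ?kj ?andbF ?orbT ?andbT ?orbF.
    have -> : dcol D j = k |: dcol (hat k l D) j.
      apply/setP => i; rewrite !inE /= (negbTE jl) andbT.
      by case: (eqVneq i k) => [->|ik]; rewrite ?kj ?andbT /=.
    by apply: setleU1 => //; apply: H.
  have -> : dcol (aug k l D (hat k l C)) j = dcol (hat k l C) j.
    apply/setP => i; rewrite !inE /= (negbTE jl) !andbF !orbF.
    by case: (eqVneq i k) => [->|ik]; rewrite ?(negbTE kj) ?andbF ?andbT ?orbF.
  have -> : dcol D j = dcol (hat k l D) j.
    apply/setP => i; rewrite !inE /= (negbTE jl) andbT.
    by case: (eqVneq i k) => [->|ik]; rewrite ?(negbTE kj) ?andbT ?andbF.
  exact: H.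
split => // D C' H Hk.
have Hl : forall i, (i, l) \notin C'.
  move=> i; have [Hc _] := H l.
  have E0 : dcol (hat k l D) l = set0.
    by apply/setP => x; rewrite !inE /= eqxx !andbF.
  rewrite E0 cards0 in Hc.
  have := cards0_eq Hc => /setP /(_ i).
  by rewrite !inE => ->.
have HC : hat k l C' = C'.
  apply/setP => [[i j]]; rewrite inE /=.
  case: (eqVneq i k) => [->|ik]; first by rewrite (negbTE (Hk j)).
  case: (eqVneq j l) => [->|jl]; first by rewrite (negbTE (Hl i)).
  by rewrite andbT.
exists (aug k l D C'); split.
  by rewrite -{1}HC; apply: P1; rewrite HC.
apply/setP => [[i j]]; rewrite !inE /=.
case: (eqVneq i k) => [->|ik]; first by rewrite (negbTE (Hk j)) /= !andbF.
case: (eqVneq j l) => [->|jl]; first by rewrite (negbTE (Hl i)) /= ?eqxx ?andbF ?orbF.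
by rewrite ?andbF ?orbF ?andbT.
Qed.
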